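(* (i) If $n\ge 2$ is even, there is a locally finite $n$-distributive variety which is not $(n-1)$-directed-distributive. (ii) For every $n\ge 2$ there is a locally finite $n$-directed-distributive variety which is not $(2n-2)$-alvin, hence not $(2n-3)$-distributive. (iii) More generally, for every $n\ge2$ there is a locally finite $n$-directed-distributive variety in which the congruence identity $\alpha(\beta\circ\gamma)\subseteq(\alpha(\gamma\circ\beta))^{n-1}$ fails.
   Context: Ternary terms $t_0,\dots,t_n$ with $t_0(x,y,z)=x$, $t_n(x,y,z)=z$, $t_h(x,y,x)=x$ for all $h$ are: J\'onsson terms if moreover $t_h(x,x,z)=t_{h+1}(x,x,z)$ for even $h$ and $t_h(x,z,z)=t_{h+1}(x,z,z)$ for odd $h$ ($0\le h<n$); alvin terms if even/odd are exchanged there; directed J\'onsson terms if $t_h(x,z,z)=t_{h+1}(x,x,z)$ for all $0\le h<n$. A variety is $n$-distributive, $n$-alvin, $n$-directed-distributive if it has, respectively, J\'onsson, alvin, directed J\'onsson terms $t_0,\dots,t_n$. In congruence identities juxtaposition is intersection, $\circ$ composition, $R^k$ the $k$-fold composition of $R$. *)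

(* Defs.v *)
From mathcomp Require Import all_boot.
Set Implicit Arguments. Unset Strict Implicit. Unset Printing Implicit Defensive.

Record signature := Signature { op : Type; arity : op -> nat }.

Inductive term (S : signature) (X : Type) : Type :=
| Var : X -> term S X
| App : forall f : op S, ('I_(arity f) -> term S X) -> term S X.
Arguments Var {S X} x.
Arguments App {S X} f args.

Record algebra (S : signature) := Algebra {
  carrier :> Type;
  interp : forall f : op S, ('I_(arity f) -> carrier) -> carrier }.
Arguments interp {S} a f _.

Fixpoint eval (S : signature) (X : Type) (A : algebra S) (v : X -> A)
  (t : term S X) : A :=
  match t with
  | Var x => v x
  | App f args => interp A f (fun i => @eval S X A v (args i))
  end.
Arguments eval {S X} A v t.

Definition equation (S : signature) := (term S nat * term S nat)%type.

Definition satisfies (S : signature) (A : algebra S) (e : equation S) : Prop :=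
  forall v : nat -> A, eval A v e.1 = eval A v e.2.

Definition variety_of (S : signature) (Sigma : equation S -> Prop)
  : algebra S -> Prop :=
  fun A => forall e, Sigma e -> satisfies A e.

Definition finite_type (A : Type) : Prop :=
  exists (m : nat) (f : 'I_m -> A), forall a : A, exists i, f i = a.

Definition generated_by (S : signature) (A : algebra S) (k : nat)
  (g : 'I_k -> A) : Prop :=
  forall a : A, exists t : term S 'I_k, eval A g t = a.

Definition locally_finite (S : signature) (V : algebra S -> Prop) : Prop :=
  forall A : algebra S, V A ->
  forall (k : nat) (g : 'I_k -> A), @generated_by S A k g -> finite_type A.

Definition xyz (A : Type) (x y z : A) : 'I_3 -> A :=
  fun i => match nat_of_ord i with 0 => x | 1 => y | _ => z end.

Definition ev3 (S : signature) (A : algebra S) (t : term S 'I_3) (x y z : A) : A :=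
  eval A (xyz x y z) t.

Definition base_conds (S : signature) (V : algebra S -> Prop) (n : nat)
  (t : nat -> term S 'I_3) : Prop :=
  (forall A, V A -> forall x y z : A, ev3 (t 0) x y z = x) /\
  (forall A, V A -> forall x y z : A, ev3 (t n) x y z = z) /\
  (forall h, h <= n -> forall A, V A -> forall x y : A, ev3 (t h) x y x = x).

Definition jonsson_terms (S : signature) (V : algebra S -> Prop) (n : nat)
  (t : nat -> term S 'I_3) : Prop :=
  base_conds V n t /\
  forall h, h < n -> forall A, V A -> forall x z : A,
    if ~~ odd h then ev3 (t h) x x z = ev3 (t h.+1) x x z
    else ev3 (t h) x z z = ev3 (t h.+1) x z z.

Definition alvin_terms (S : signature) (V : algebra S -> Prop) (n : nat)
  (t : nat -> term S 'I_3) : Prop :=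
  base_conds V n t /\
  forall h, h < n -> forall A, V A -> forall x z : A,
    if odd h then ev3 (t h) x x z = ev3 (t h.+1) x x z
    else ev3 (t h) x z z = ev3 (t h.+1) x z z.

Definition directed_jonsson_terms (S : signature) (V : algebra S -> Prop)
  (n : nat) (t : nat -> term S 'I_3) : Prop :=
  base_conds V n t /\
  forall h, h < n -> forall A, V A -> forall x z : A,
    ev3 (t h) x z z = ev3 (t h.+1) x x z.

Definition n_distributive (S : signature) (V : algebra S -> Prop) (n : nat) :=
  exists t, jonsson_terms V n t.
Definition n_alvin (S : signature) (V : algebra S -> Prop) (n : nat) :=
  exists t, alvin_terms V n t.
Definition n_directed_distributive (S : signature) (V : algebra S -> Prop) (n : nat) :=
  exists t, directed_jonsson_terms V n t.

Definition relint (A : Type) (R T : A -> A -> Prop) : A -> A -> Prop :=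
  fun x y => R x y /\ T x y.
Definition relcomp (A : Type) (R T : A -> A -> Prop) : A -> A -> Prop :=
  fun x z => exists y, R x y /\ T y z.
Fixpoint relpow (A : Type) (k : nat) (R : A -> A -> Prop) : A -> A -> Prop :=
  match k with
  | 0 => fun x y => x = y
  | 1 => R
  | k'.+1 => relcomp (relpow k' R) R
  end.

Definition is_congruence (S : signature) (A : algebra S) (R : A -> A -> Prop) :=
  (forall x, R x x) /\ (forall x y, R x y -> R y x) /\
  (forall x y z, R x y -> R y z -> R x z) /\
  (forall f (u w : 'I_(arity f) -> A), (forall i, R (u i) (w i)) ->
     R (interp A f u) (interp A f w)).

Definition cong_id_holds_in (S : signature) (A : algebra S) (k : nat) : Prop :=
  forall alpha beta gamma : A -> A -> Prop,
    @is_congruence S A alpha -> @is_congruence S A beta -> @is_congruence S A gamma ->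
    forall x y, relint alpha (relcomp beta gamma) x y ->
                relpow k (relint alpha (relcomp gamma beta)) x y.

Definition cong_id_holds (S : signature) (V : algebra S -> Prop) (k : nat) : Prop :=
  forall A, V A -> @cong_id_holds_in S A k.

(* Main.v *)
Require Import Defs.
From Stdlib Require Import Lia FunctionalExtensionality ClassicalEpsilon Classical.
From mathcomp Require Import all_boot zify.

Ltac ifs := repeat (match goal with |- context [if ?b then _ else _] => let H := fresh "H" in case H: b end).

Definition med3 (a b c : nat) := maxn (minn a b) (minn (maxn a b) c).
Definition cc N h x z := if x <= z then med3 x z h.-1 else med3 x z (N.+1 - h).
Definition dd N h x y z :=
  if h == 0 then x else if N < h then z else med3 (cc N h x z) (cc N h.+1 x z) y.

Lemma med3_mono a b c a' b' c' : a <= a' -> b <= b' -> c <= c' -> med3 a b c <= med3 a' b' c'.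
Proof. rewrite /med3; lia. Qed.
Lemma med3_lo a b c : minn a b <= med3 a b c. Proof. rewrite /med3; lia. Qed.
Lemma med3_hi a b c : med3 a b c <= maxn a b. Proof. rewrite /med3; lia. Qed.
Lemma med3_b a b c : (a <= b <= c) || (c <= b <= a) -> med3 a b c = b.
Proof. rewrite /med3; lia. Qed.
Lemma med3_a a b c : (b <= a <= c) || (c <= a <= b) -> med3 a b c = a.
Proof. rewrite /med3; lia. Qed.
Lemma med3_xx a c : med3 a a c = a.
Proof. rewrite /med3; lia. Qed.

Lemma cc_up N h x z : x <= z -> cc N h x z = med3 x z h.-1.
Proof. by rewrite /cc => ->. Qed.
Lemma cc_dn N h x z : z < x -> cc N h x z = med3 x z (N.+1 - h).
Proof. move=> H; rewrite /cc; ifs => //; lia. Qed.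

Lemma cc_between N h x z : 1 <= h <= N ->
  (x <= z -> x <= cc N h x z <= cc N h.+1 x z /\ cc N h.+1 x z <= z) /\
  (z < x -> z <= cc N h.+1 x z <= cc N h x z /\ cc N h x z <= x).
Proof.
move=> hh; split=> hxz.
  rewrite !cc_up //= /med3; lia.
rewrite !cc_dn //= /med3; lia.
Qed.

Lemma cc_1 N x z : x <= N -> cc N 1 x z = x.
Proof. rewrite /cc /med3; ifs; lia. Qed.
Lemma cc_last N x z : z <= N -> cc N N.+1 x z = z.
Proof. rewrite /cc /med3; ifs; lia. Qed.

Lemma cc_xx N h x : cc N h x x = x.
Proof. by rewrite cc_up // /med3; lia. Qed.

Lemma dd_xyx N h x y : dd N h x y x = x.
Proof. rewrite /dd !cc_xx med3_xx; by ifs. Qed.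

Lemma dd_dir N h x z : x <= N -> z <= N -> h <= N -> dd N h x z z = dd N h.+1 x x z.
Proof.
move=> hx hz hN; rewrite /dd.
have -> : (h.+1 == 0) = false by [].
case: (posnP h) => [->|h0].
  case: (ltnP N 1) => HN; first by lia.
  by rewrite cc_1 // /med3; lia.
have -> : (N < h) = false by lia.
have hh : 1 <= h <= N by rewrite h0 hN.
have [HU HD] := @cc_between N h x z hh.
case: (ltnP N h.+1) => hN'.
  have E : h = N by lia.
  rewrite E cc_last // in HU HD *.
  apply: med3_b; case: (leqP x z) => xz; [have := HU xz | have := HD xz]; lia.
have hh' : 1 <= h.+1 <= N by rewrite hN'.
have [HU' HD'] := @cc_between N h.+1 x z hh'.
rewrite (@med3_b (cc N h x z)); last by case: (leqP x z) => xz; [have := HU xz | have := HD xz]; lia.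
rewrite med3_a //; case: (leqP x z) => xz; [have := HU xz; have := HU' xz | have := HD xz; have := HD' xz]; lia.
Qed.

Lemma dd_le N h x y z : x <= N -> y <= N -> z <= N -> dd N h x y z <= N.
Proof.
move=> hx hy hz; rewrite /dd; ifs => //.
have L1 := med3_hi (cc N h x z) (cc N h.+1 x z) y.
have : cc N h x z <= N by rewrite /cc /med3; ifs; lia.
have : cc N h.+1 x z <= N by rewrite /cc /med3; ifs; lia.
lia.
Qed.

Lemma cc_mono N h x z x' z' : x <= x' -> z <= z' -> cc N h x z <= cc N h x' z'.
Proof. rewrite /cc /med3; ifs; lia. Qed.

Lemma dd_mono N h x y z x' y' z' : x <= x' -> y <= y' -> z <= z' -> dd N h x y z <= dd N h x' y' z'.
Proof.
move=> hx hy hz; rewrite /dd; ifs => //.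
by apply: med3_mono => //; apply: cc_mono.
Qed.

Definition rho (p q r : nat) := (p <= q) && ((r == 0) ==> (q <= p.+1)).

Lemma med3_shift a b c : med3 a.+1 b.+1 c.+1 = (med3 a b c).+1.
Proof. rewrite /med3; lia. Qed.

Lemma med3_zero a b c : med3 a b c = 0 -> (a = 0 /\ b = 0) \/ (a = 0 /\ c = 0) \/ (b = 0 /\ c = 0).
Proof. rewrite /med3; lia. Qed.

Lemma cc_zero N h x z : 1 <= h <= N.+1 -> cc N h x z = 0 ->
  (x = 0 /\ (z = 0 \/ h = 1)) \/ (z = 0 /\ h = N.+1).
Proof. rewrite /cc /med3; ifs; lia. Qed.

Lemma cc_shift1 N k k' x z : k <= k'.+1 -> k' <= k.+1 -> 1 <= k' ->
  cc N k x.+1 z.+1 <= (cc N k' x z).+1.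
Proof. rewrite /cc ltnS /med3; ifs; lia. Qed.

Lemma cc2_slow N x z x' z' : 1 <= N -> x <= x' <= x.+1 -> z <= z' -> x' <= N -> z' <= N ->
  cc N 2 x' z' <= (cc N 2 x z).+1.
Proof. rewrite /cc /med3; ifs; lia. Qed.

Lemma ccN_slow N x z x' z' : 1 <= N -> x <= x' -> z <= z' <= z.+1 -> x' <= N -> z' <= N ->
  cc N N x' z' <= (cc N N x z).+1.
Proof. rewrite /cc /med3; ifs; lia. Qed.

Lemma L13 N h P1 P2 P3 Q1 Q2 Q3 : 1 <= h <= N ->
  P1 <= Q1 <= P1.+1 -> P2 <= Q2 -> P3 <= Q3 <= P3.+1 ->
  dd N h Q1 Q2 Q3 <= (dd N h P1 P2 P3).+1.
Proof.
move=> /andP[h1 hN] /andP[a1 b1] c2 /andP[a3 b3].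
rewrite /dd; have -> : (h == 0) = false by lia.
have -> : (N < h) = false by lia.
have E1 : cc N h Q1 Q3 <= (cc N h P1 P3).+1.
  apply: leq_trans (@cc_mono N h _ _ _ _ b1 b3) _; apply: cc_shift1; lia.
have E2 : cc N h Q1 Q3 <= (cc N h.+1 P1 P3).+1.
  apply: leq_trans (@cc_mono N h _ _ _ _ b1 b3) _; apply: cc_shift1; lia.
have E3 : cc N h.+1 Q1 Q3 <= (cc N h P1 P3).+1.
  apply: leq_trans (@cc_mono N h.+1 _ _ _ _ b1 b3) _; apply: cc_shift1; lia.
have E4 : cc N h.+1 Q1 Q3 <= (cc N h.+1 P1 P3).+1.
  apply: leq_trans (@cc_mono N h.+1 _ _ _ _ b1 b3) _; apply: cc_shift1; lia.
have := med3_hi (cc N h Q1 Q3) (cc N h.+1 Q1 Q3) Q2.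
have := med3_lo (cc N h P1 P3) (cc N h.+1 P1 P3) P2.
lia.
Qed.

Lemma L12 N P1 P2 P3 Q1 Q2 Q3 : 1 <= N ->
  P1 <= Q1 <= P1.+1 -> P2 <= Q2 <= P2.+1 -> P3 <= Q3 -> Q1 <= N -> Q3 <= N ->
  dd N 1 Q1 Q2 Q3 <= (dd N 1 P1 P2 P3).+1.
Proof.
move=> N1 h1 h2 h3 q1 q3.
rewrite /dd /=; have -> : (N < 1) = false by lia.
have p1 : P1 <= N by lia. have p3 : P3 <= N by lia.
rewrite !cc_1 // -med3_shift; apply: med3_mono; try lia.
apply: cc2_slow; lia.
Qed.

Lemma L23 N P1 P2 P3 Q1 Q2 Q3 : 1 <= N ->
  P1 <= Q1 -> P2 <= Q2 <= P2.+1 -> P3 <= Q3 <= P3.+1 -> Q1 <= N -> Q3 <= N ->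
  dd N N Q1 Q2 Q3 <= (dd N N P1 P2 P3).+1.
Proof.
move=> N1 h1 h2 h3 q1 q3.
rewrite /dd; have -> : (N == 0) = false by lia.
rewrite ltnn.
have p3 : P3 <= N by lia.
rewrite !cc_last // -med3_shift; apply: med3_mono; try lia.
apply: ccN_slow; lia.
Qed.

Lemma Rcases N h R1 R2 R3 : 1 <= h <= N -> R1 <= N -> R3 <= N ->
  med3 (cc N h R1 R3) (cc N h.+1 R1 R3) R2 = 0 ->
  (R1 = 0 /\ R3 = 0) \/ (h = 1 /\ R1 = 0 /\ R2 = 0) \/ (h = N /\ R2 = 0 /\ R3 = 0).
Proof.
move=> hh r1 r3 /med3_zero.
have hh0 : 1 <= h <= N.+1 by lia.
have hh1 : 1 <= h.+1 <= N.+1 by lia.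
move=> [[Z1 Z2]|[[Z1 Z2]|[Z1 Z2]]].
- have := @cc_zero N h R1 R3 hh0 Z1; have := @cc_zero N h.+1 R1 R3 hh1 Z2; lia.
- have := @cc_zero N h R1 R3 hh0 Z1; lia.
- have := @cc_zero N h.+1 R1 R3 hh1 Z1; lia.
Qed.

Lemma dd_rho N h P1 P2 P3 Q1 Q2 Q3 R1 R2 R3 :
  Q1 <= N -> Q2 <= N -> Q3 <= N -> R1 <= N -> R3 <= N ->
  rho P1 Q1 R1 -> rho P2 Q2 R2 -> rho P3 Q3 R3 ->
  rho (dd N h P1 P2 P3) (dd N h Q1 Q2 Q3) (dd N h R1 R2 R3).
Proof.
move=> q1 q2 q3 r1 r3 /andP[a1 b1] /andP[a2 b2] /andP[a3 b3].
apply/andP; split; first exact: dd_mono.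
apply/implyP => /eqP Z.
case: (posnP h) => [E|h0].
  move: Z b1; rewrite E /dd /= => ->; by [].
case: (ltnP N h) => hN.
  move: Z b3; rewrite /dd; have -> : (h == 0) = false by lia.
  by rewrite hN => ->.
have Z' : med3 (cc N h R1 R3) (cc N h.+1 R1 R3) R2 = 0.
  move: Z; rewrite /dd; have -> : (h == 0) = false by lia.
  by rewrite ltnNge hN.
have hh : 1 <= h <= N by lia.
have [[E1 E3]|[[Eh [E1 E2]]|[Eh [E2 E3]]]] := @Rcases N h R1 R2 R3 hh r1 r3 Z'.
- move: b1 b3; rewrite E1 E3 /= => b1 b3.
  apply: L13 => //; lia.
- move: b1 b2; rewrite E1 E2 /= => b1 b2.
  rewrite Eh; apply: L12 => //; lia.
- move: b2 b3; rewrite E2 E3 /= => b2 b3.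
  rewrite Eh; apply: L23 => //; lia.
Qed.

Definition CL N L x z := maxn (minn x (N - L)) (minn z (maxn x L)).
Definition lam h := (h./2).*2.
Definition mu h := (h.+1)./2.*2 - 1.
Definition tt N h x y z :=
  if h == 0 then x else if N < h then z else
  if (y == z) && (y != x) then CL N (mu h) x z else CL N (lam h) x z.
Definition sigma (p q r : nat) := (r == 0) ==> (q <= p.+1).

Lemma lm h : exists k, (h = 2 * k /\ lam h = 2 * k /\ mu h = 2 * k - 1) \/
                       (h = (2 * k).+1 /\ lam h = 2 * k /\ mu h = (2 * k).+1).
Proof.
exists h./2; rewrite /lam /mu; have := odd_double_half h.
case: (odd h) => /= E.
- right; rewrite -E /= uphalf_double; rewrite -!muln2; lia.
- left; rewrite -E /= uphalf_double -!muln2. lia.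
Qed.

Lemma CL_le N L x z : x <= N -> z <= N -> CL N L x z <= N.
Proof. rewrite /CL; lia. Qed.
Lemma CL_xx N L x : CL N L x x = x.
Proof. rewrite /CL; lia. Qed.
Lemma CL_0 N x z : x <= N -> CL N 0 x z = x.
Proof. rewrite /CL; lia. Qed.
Lemma CL_N N x z : z <= N -> CL N N x z = z.
Proof. rewrite /CL; lia. Qed.

Lemma tt_le N h x y z : x <= N -> z <= N -> tt N h x y z <= N.
Proof. move=> hx hz; rewrite /tt; ifs => //; exact: CL_le. Qed.

Lemma tt_xyx N h x y : tt N h x y x = x.
Proof. rewrite /tt; ifs => //; exact: CL_xx. Qed.

Lemma oddE n : odd n -> exists m, n = (2 * m).+1.
Proof. move=> o; exists n./2; have := odd_double_half n; rewrite o -muln2; lia. Qed.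
Lemma evenE n : ~~ odd n -> exists m, n = 2 * m.
Proof. move=> o; exists n./2; have := odd_double_half n; rewrite (negbTE o) -muln2; lia. Qed.

Lemma tt_mid N h x y z : 1 <= h <= N ->
  tt N h x y z = if (y == z) && (y != x) then CL N (mu h) x z else CL N (lam h) x z.
Proof.
move=> hh; rewrite /tt.
have -> : (h == 0) = false by lia.
by have -> : (N < h) = false by lia.
Qed.

Lemma tt_even N h x z : odd N -> ~~ odd h -> h <= N -> x <= N -> z <= N ->
  tt N h x x z = tt N h.+1 x x z.
Proof.
move=> /oddE[M EN] /evenE[k Eh] hN hx hz.
have [j Hj] := lm h. have [j' Hj'] := lm h.+1.
have h1 : 1 <= h.+1 <= N by lia.
rewrite (@tt_mid _ _ _ _ _ h1) eqxx /= andbF.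
case: (posnP h) => [E|h0].
  rewrite E /=; have -> : lam 1 = 0 by [].
  by rewrite CL_0.
have h2 : 1 <= h <= N by lia.
rewrite (@tt_mid _ _ _ _ _ h2) eqxx /= andbF.
have -> : lam h.+1 = lam h by lia.
by [].
Qed.

Lemma tt_odd N h x z : odd N -> odd h -> h <= N -> x <= N -> z <= N ->
  tt N h x z z = tt N h.+1 x z z.
Proof.
move=> /oddE[M EN] /oddE[k Eh] hN hx hz.
have [j Hj] := lm h. have [j' Hj'] := lm h.+1.
case: (eqVneq z x) => [->|nzx].
  by rewrite !tt_xyx.
have h2 : 1 <= h <= N by lia.
rewrite (@tt_mid _ _ _ _ _ h2) eqxx nzx /=.
case: (ltnP N h.+1) => hN'.
  have -> : mu h = N by lia.
  rewrite CL_N // /tt; have -> : (h.+1 == 0) = false by [].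
  by rewrite hN'.
have h1 : 1 <= h.+1 <= N by lia.
rewrite (@tt_mid _ _ _ _ _ h1) eqxx nzx /=.
have -> : mu h.+1 = mu h by lia.
by [].
Qed.

Lemma CL_zero N L x z : CL N L x z = 0 -> (x = 0 \/ N <= L) /\ (z = 0 \/ (x = 0 /\ L = 0)).
Proof. rewrite /CL; lia. Qed.

Lemma tt_zero N h R1 R2 R3 : odd N -> 1 <= h <= N -> R1 <= N -> R3 <= N ->
  tt N h R1 R2 R3 = 0 -> (R1 = 0 /\ R3 = 0) \/ (h = 1 /\ R1 = 0) \/ (h = N /\ R3 = 0).
Proof.
move=> /oddE[M EN] hh r1 r3; have [j Hj] := lm h.
rewrite (@tt_mid _ _ _ _ _ hh); case: ifP => _ /CL_zero; lia.
Qed.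

Lemma CL_shift N L L' x z x' z' : L' <= L.+1 -> L <= L'.+1 -> x' <= x.+1 -> z' <= z.+1 ->
  CL N L' x' z' <= (CL N L x z).+1.
Proof.
move=> l1 l2 hx hz; rewrite /CL.
have A : minn x' (N - L') <= (minn x (N - L)).+1 by lia.
have B : minn z' (maxn x' L') <= (minn z (maxn x L)).+1 by lia.
lia.
Qed.

Lemma T13 N h P1 P2 P3 Q1 Q2 Q3 : 1 <= h <= N -> Q1 <= P1.+1 -> Q3 <= P3.+1 ->
  tt N h Q1 Q2 Q3 <= (tt N h P1 P2 P3).+1.
Proof.
move=> hh q1 q3; have [j Hj] := lm h.
rewrite !(@tt_mid _ _ _ _ _ hh); case: ifP => _; case: ifP => _; apply: CL_shift => //; lia.
Qed.

Lemma CL1_hi N x z : CL N 1 x z <= maxn x 1. Proof. rewrite /CL; lia. Qed.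
Lemma CL1_lo N x z : minn x (N - 1) <= CL N 1 x z. Proof. rewrite /CL; lia. Qed.
Lemma CLN1_hi N x z : CL N N.-1 x z <= maxn z 1. Proof. rewrite /CL; lia. Qed.
Lemma CLN1_lo N x z : minn z N.-1 <= CL N N.-1 x z. Proof. rewrite /CL; lia. Qed.

Lemma T1 N P1 P2 P3 Q1 Q2 Q3 : 1 <= N -> Q1 <= P1.+1 -> P1 <= N -> Q1 <= N ->
  P3 <= N -> Q3 <= N -> tt N 1 Q1 Q2 Q3 <= (tt N 1 P1 P2 P3).+1.
Proof.
move=> N1 q1 p1 qq1 p3 qq3; have hh : 1 <= 1 <= N by rewrite N1.
rewrite !(@tt_mid _ _ _ _ _ hh); have -> : lam 1 = 0 by []; have -> : mu 1 = 1 by [].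
rewrite !CL_0 //.
have Hq : (if (Q2 == Q3) && (Q2 != Q1) then CL N 1 Q1 Q3 else Q1) <= maxn Q1 1.
  case: ifP => _; [exact: CL1_hi | exact: leq_maxl].
have Hp : minn P1 (N - 1) <= (if (P2 == P3) && (P2 != P1) then CL N 1 P1 P3 else P1).
  case: ifP => _; [exact: CL1_lo | exact: geq_minl].
apply: leq_trans Hq _; apply: leq_trans _ (Hp : _ < _.+1); lia.
Qed.

Lemma TN N P1 P2 P3 Q1 Q2 Q3 : odd N -> Q3 <= P3.+1 -> P1 <= N -> Q1 <= N ->
  P3 <= N -> Q3 <= N -> tt N N Q1 Q2 Q3 <= (tt N N P1 P2 P3).+1.
Proof.
move=> /oddE[M EN] q3 p1 qq1 p3 qq3; have hh : 1 <= N <= N by rewrite EN leqnn.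
have [j Hj] := lm N.
rewrite !(@tt_mid _ _ _ _ _ hh).
have -> : lam N = N.-1 by lia.
have -> : mu N = N by lia.
rewrite !CL_N //.
have Hq : (if (Q2 == Q3) && (Q2 != Q1) then Q3 else CL N N.-1 Q1 Q3) <= maxn Q3 1.
  case: ifP => _; [exact: leq_maxl | exact: CLN1_hi].
have Hp : minn P3 N.-1 <= (if (P2 == P3) && (P2 != P1) then P3 else CL N N.-1 P1 P3).
  case: ifP => _; [exact: geq_minl | exact: CLN1_lo].
apply: leq_trans Hq _; apply: leq_trans _ (Hp : _ < _.+1); lia.
Qed.

Lemma tt_sigma N h P1 P2 P3 Q1 Q2 Q3 R1 R2 R3 : odd N ->
  P1 <= N -> P3 <= N -> Q1 <= N -> Q3 <= N -> R1 <= N -> R3 <= N ->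
  sigma P1 Q1 R1 -> sigma P2 Q2 R2 -> sigma P3 Q3 R3 ->
  sigma (tt N h P1 P2 P3) (tt N h Q1 Q2 Q3) (tt N h R1 R2 R3).
Proof.
move=> oN p1 p3 q1 q3 r1 r3 b1 b2 b3.
apply/implyP => /eqP Z.
case: (posnP h) => [E|h0].
  move: Z b1; rewrite E /tt /= => ->; by [].
case: (ltnP N h) => hN.
  move: Z b3; rewrite /tt; have -> : (h == 0) = false by lia.
  by rewrite hN => ->.
have hh : 1 <= h <= N by lia.
have N1 : 1 <= N by lia.
have [[E1 E3]|[[Eh E1]|[Eh E3]]] := @tt_zero N h R1 R2 R3 oN hh r1 r3 Z.
- move: b1 b3; rewrite E1 E3 /= => b1 b3; exact: T13.
- move: b1; rewrite E1 Eh /= => b1; exact: T1.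
- move: b3; rewrite E3 Eh /= => b3; exact: TN.
Qed.

Set Implicit Arguments. Unset Strict Implicit. Unset Printing Implicit Defensive.

Section Gen.
Variable S : signature.

Fixpoint rename (X Y : Type) (r : X -> Y) (t : term S X) : term S Y :=
  match t with
  | Var x => Var (r x)
  | App f args => App f (fun i => rename r (args i))
  end.

Lemma eval_rename (A : algebra S) (X Y : Type) (r : X -> Y) (v : Y -> A) :
  forall t : term S X, eval A v (rename r t) = eval A (fun x => v (r x)) t.
Proof.
fix IH 1; case=> [x|f args] //=.
congr (interp A f); apply: functional_extensionality => i; exact: IH.
Qed.

Variable T : finType.
Variable ops : forall f : op S, ('I_(arity f) -> T) -> T.
Definition Afin : algebra S := Algebra ops.
Definition SigA : equation S -> Prop := fun e => satisfies Afin e.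
Definition VA := variety_of SigA.

Lemma Afin_in : VA Afin.
Proof. by move=> e He. Qed.

Lemma lf : locally_finite VA.
Proof.
move=> B VB k g gen.
case: (classic (exists b : B, True)) => [[b0 _]|nB]; last first.
  have f0 : 'I_0 -> B by case=> m; rewrite ltn0.
  by exists 0, f0 => a; exfalso; apply: nB; exists a.
pose FT := {ffun {ffun 'I_k -> T} -> T}.
pose tau (t : term S 'I_k) : FT := [ffun w : {ffun 'I_k -> T} => eval Afin (fun i => w i) t].
have key : forall t1 t2, tau t1 = tau t2 -> eval B g t1 = eval B g t2.
  move=> t1 t2 E.
  pose e : equation S := (rename (@nat_of_ord k) t1, rename (@nat_of_ord k) t2).
  have He : SigA e.
    move=> v /=; rewrite !eval_rename.
    have := congr1 (fun F : FT => F [ffun i : 'I_k => v (nat_of_ord i)]) E.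
    rewrite /tau !ffunE.
    have -> : (fun i : 'I_k => [ffun i0 : 'I_k => v (nat_of_ord i0)] i) = (fun i => v (nat_of_ord i)).
      by apply: functional_extensionality => i; rewrite ffunE.
    by [].
  have := VB e He (fun m => if insub m is Some i then g i else b0).
  rewrite /= !eval_rename.
  have -> : (fun x : 'I_k => if insub (nat_of_ord x) is Some i then g i else b0) = g.
    by apply: functional_extensionality => i; rewrite (valK i).
  by [].
pose psi (F : FT) : B := match excluded_middle_informative (exists t, tau t = F) with
  | left H => eval B g (proj1_sig (constructive_indefinite_description _ H))
  | right _ => b0 end.
exists #|FT|, (fun i => psi (enum_val i)) => a.
have [t Ht] := gen a.
exists (enum_rank (tau t)); rewrite enum_rankK /psi.
case: excluded_middle_informative => [H|[]]; last by exists t.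
case: constructive_indefinite_description => t' /= Ht'.
by rewrite -Ht; apply: key.
Qed.

Definition ev3p (A : algebra S) (t : term S 'I_3) (p : 'I_3 -> 'I_3) (x y z : A) :=
  eval A (fun i => xyz x y z (p i)) t.

Lemma transfer (t1 t2 : term S 'I_3) (p1 p2 : 'I_3 -> 'I_3) :
  (forall x y z : T, ev3p (A:=Afin) t1 p1 x y z = ev3p (A:=Afin) t2 p2 x y z) ->
  forall B, VA B -> forall x y z : B, ev3p t1 p1 x y z = ev3p t2 p2 x y z.
Proof.
move=> H B VB x y z.
pose e : equation S := (rename (fun i => nat_of_ord (p1 i)) t1, rename (fun i => nat_of_ord (p2 i)) t2).
have He : SigA e.
  move=> v; rewrite /= !eval_rename.
  have E : forall s : 'I_3 -> 'I_3, (fun i => v (nat_of_ord (s i))) = (fun i => xyz (v 0) (v 1) (v 2) (s i)).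
    move=> s; apply: functional_extensionality => i; rewrite /xyz; case: (s i) => [[|[|[|m]]] Hm] //=.
  by rewrite !E; apply: H.
have := VB e He (fun m => match m with 0 => x | 1 => y | _ => z end).
by rewrite /= !eval_rename.
Qed.

Variable P : pred (T * T * T).
Definition interp3 f (a : 'I_(arity f) -> T * T * T) : T * T * T :=
  (ops (fun i => (a i).1.1), ops (fun i => (a i).1.2), ops (fun i => (a i).2)).
Hypothesis closed : forall f (a : 'I_(arity f) -> T * T * T), (forall i, P (a i)) -> P (interp3 a).

Definition Bsub : algebra S :=
  @Algebra S {u : T * T * T | P u}
    (fun f a => exist _ (interp3 (fun i => proj1_sig (a i))) (closed (fun i => proj2_sig (a i)))).

Lemma eval_Bsub (X : Type) (v : X -> Bsub) : forall t : term S X,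
  proj1_sig (eval Bsub v t) =
  (eval Afin (fun x => (proj1_sig (v x)).1.1) t, eval Afin (fun x => (proj1_sig (v x)).1.2) t,
   eval Afin (fun x => (proj1_sig (v x)).2) t).
Proof.
fix IH 1; case=> [x|f args] /=.
  by case: (proj1_sig (v x)) => [[]].
rewrite /interp3.
have E1 : (fun i => (proj1_sig (eval Bsub v (args i))).1.1) = (fun i => eval Afin (fun x => (proj1_sig (v x)).1.1) (args i))
  by apply: functional_extensionality => i; rewrite IH.
have E2 : (fun i => (proj1_sig (eval Bsub v (args i))).1.2) = (fun i => eval Afin (fun x => (proj1_sig (v x)).1.2) (args i))
  by apply: functional_extensionality => i; rewrite IH.
have E3 : (fun i => (proj1_sig (eval Bsub v (args i))).2) = (fun i => eval Afin (fun x => (proj1_sig (v x)).2) (args i))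
  by apply: functional_extensionality => i; rewrite IH.
by rewrite E1 E2 E3.
Qed.

Lemma Bsub_in : VA Bsub.
Proof.
move=> e He v; apply: val_inj => /=; rewrite !eval_Bsub.
by rewrite (He (fun x => (proj1_sig (v x)).1.1)) (He (fun x => (proj1_sig (v x)).1.2)) (He (fun x => (proj1_sig (v x)).2)).
Qed.

Lemma ev3_Bsub (t : term S 'I_3) (x y z : Bsub) :
  proj1_sig (ev3 t x y z) =
  (ev3 (A := Afin) t (proj1_sig x).1.1 (proj1_sig y).1.1 (proj1_sig z).1.1,
   ev3 (A := Afin) t (proj1_sig x).1.2 (proj1_sig y).1.2 (proj1_sig z).1.2,
   ev3 (A := Afin) t (proj1_sig x).2 (proj1_sig y).2 (proj1_sig z).2).
Proof.
rewrite /ev3 eval_Bsub.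
have E : forall (pr : T * T * T -> T), (fun i => pr (proj1_sig (xyz x y z i))) = xyz (pr (proj1_sig x)) (pr (proj1_sig y)) (pr (proj1_sig z)).
  by move=> pr; apply: functional_extensionality => i; rewrite /xyz; case: (nat_of_ord i) => [|[|m]].
by rewrite (E (fun u => u.1.1)) (E (fun u => u.1.2)) (E (fun u => u.2)).
Qed.

End Gen.

Set Implicit Arguments. Unset Strict Implicit. Unset Printing Implicit Defensive.

Definition sig3 : signature := @Signature nat (fun _ => 3).
Definition i0 : 'I_3 := @Ordinal 3 0 isT.
Definition i1 : 'I_3 := @Ordinal 3 1 isT.
Definition i2 : 'I_3 := @Ordinal 3 2 isT.
Definition pxyx (i : 'I_3) : 'I_3 := if nat_of_ord i == 2 then i0 else i.
Definition pxxz (i : 'I_3) : 'I_3 := if nat_of_ord i == 1 then i0 else i.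
Definition pxzz (i : 'I_3) : 'I_3 := if nat_of_ord i == 1 then i2 else i.

Lemma ev3_pat (S : signature) (A : algebra S) (t : term S 'I_3) (x y z : A) :
  [/\ ev3 t x y z = ev3p t id x y z, ev3 t x y x = ev3p t pxyx x y z,
      ev3 t x x z = ev3p t pxxz x y z & ev3 t x z z = ev3p t pxzz x y z].
Proof.
rewrite /ev3 /ev3p; split => //; congr eval; apply: functional_extensionality => -[[|[|[|m]]] Hm] //.
Qed.

Section World.
Variable N : nat.
Variable F : nat -> nat -> nat -> nat -> nat.
Hypothesis Fle : forall h x y z, x <= N -> y <= N -> z <= N -> F h x y z <= N.

Definition opsF : forall f : op sig3, ('I_(arity f) -> 'I_N.+1) -> 'I_N.+1 :=
  fun f a => inord (F f (a i0) (a i1) (a i2)).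
Notation AW := (Afin opsF).
Definition VW := VA opsF.
Definition tm (h : nat) : term sig3 'I_3 := @App sig3 'I_3 (h : op sig3) (fun i => Var i).

Lemma ev3p_tm h p (x y z : 'I_N.+1) :
  nat_of_ord (ev3p (A := AW) (tm h) p x y z) =
  F h (xyz x y z (p i0)) (xyz x y z (p i1)) (xyz x y z (p i2)).
Proof. by rewrite /ev3p /= inordK // ltnS; apply: Fle; apply: leq_ord. Qed.

Lemma ev3_tm h (x y z : 'I_N.+1) : nat_of_ord (ev3 (A := AW) (tm h) x y z) = F h x y z.
Proof. by rewrite /ev3 /= inordK // ltnS; apply: Fle; apply: leq_ord. Qed.

Lemma tm_id (t1 t2 : term sig3 'I_3) p1 p2 :
  (forall a b c : 'I_N.+1, nat_of_ord (ev3p (A:=AW) t1 p1 a b c) = nat_of_ord (ev3p (A:=AW) t2 p2 a b c)) ->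
  forall B, VW B -> forall x y z : B, ev3p t1 p1 x y z = ev3p t2 p2 x y z.
Proof. move=> H B VB x y z; apply: (@transfer sig3 _ opsF) => // a b c; apply: ord_inj; exact: H. Qed.

Lemma W_proj1 h : (forall x y z, x <= N -> y <= N -> z <= N -> F h x y z = x) ->
  forall B, VW B -> forall x y z : B, ev3 (tm h) x y z = x.
Proof.
move=> H B VB x y z; have [-> _ _ _] := ev3_pat (tm h) x y z.
rewrite (@tm_id (tm h) (Var i0) id id _ B VB x y z) //.
move=> a b c; rewrite ev3p_tm /=; apply: H; exact: leq_ord.
Qed.

Lemma W_proj3 h : (forall x y z, x <= N -> y <= N -> z <= N -> F h x y z = z) ->
  forall B, VW B -> forall x y z : B, ev3 (tm h) x y z = z.
Proof.
move=> H B VB x y z; have [-> _ _ _] := ev3_pat (tm h) x y z.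
rewrite (@tm_id (tm h) (Var i2) id id _ B VB x y z) //.
move=> a b c; rewrite ev3p_tm /=; apply: H; exact: leq_ord.
Qed.

Lemma W_xyx h : (forall x y, x <= N -> y <= N -> F h x y x = x) ->
  forall B, VW B -> forall x y : B, ev3 (tm h) x y x = x.
Proof.
move=> H B VB x y; have [_ -> _ _] := ev3_pat (tm h) x y x.
rewrite (@tm_id (tm h) (Var i0) pxyx pxyx _ B VB x y x) //.
move=> a b c; rewrite ev3p_tm /=; apply: H; exact: leq_ord.
Qed.

Lemma W_xxz h h' : (forall x z, x <= N -> z <= N -> F h x x z = F h' x x z) ->
  forall B, VW B -> forall x z : B, ev3 (tm h) x x z = ev3 (tm h') x x z.
Proof.
move=> H B VB x z; have [_ _ -> _] := ev3_pat (tm h) x x z; have [_ _ -> _] := ev3_pat (tm h') x x z.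
apply: (@tm_id (tm h) (tm h') pxxz pxxz _ B VB x x z).
move=> a b c; rewrite !ev3p_tm /=; apply: H; exact: leq_ord.
Qed.

Lemma W_xzz h h' : (forall x z, x <= N -> z <= N -> F h x z z = F h' x z z) ->
  forall B, VW B -> forall x z : B, ev3 (tm h) x z z = ev3 (tm h') x z z.
Proof.
move=> H B VB x z; have [_ _ _ ->] := ev3_pat (tm h) x x z; have [_ _ _ ->] := ev3_pat (tm h') x x z.
apply: (@tm_id (tm h) (tm h') pxzz pxzz _ B VB x x z).
move=> a b c; rewrite !ev3p_tm /=; apply: H; exact: leq_ord.
Qed.

Lemma W_dir h h' : (forall x z, x <= N -> z <= N -> F h x z z = F h' x x z) ->
  forall B, VW B -> forall x z : B, ev3 (tm h) x z z = ev3 (tm h') x x z.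
Proof.
move=> H B VB x z; have [_ _ _ ->] := ev3_pat (tm h) x x z; have [_ _ -> _] := ev3_pat (tm h') x x z.
apply: (@tm_id (tm h) (tm h') pxzz pxxz _ B VB x x z).
move=> a b c; rewrite !ev3p_tm /=; apply: H; exact: leq_ord.
Qed.

Variable Q3 : nat -> nat -> nat -> bool.
Hypothesis Fpres : forall h p1 p2 p3 q1 q2 q3 r1 r2 r3,
  p1 <= N -> p2 <= N -> p3 <= N -> q1 <= N -> q2 <= N -> q3 <= N -> r1 <= N -> r2 <= N -> r3 <= N ->
  Q3 p1 q1 r1 -> Q3 p2 q2 r2 -> Q3 p3 q3 r3 -> Q3 (F h p1 p2 p3) (F h q1 q2 q3) (F h r1 r2 r3).

Definition PW : pred ('I_N.+1 * 'I_N.+1 * 'I_N.+1) := fun u => Q3 u.1.1 u.1.2 u.2.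

Lemma closedW : forall f (a : 'I_(arity f) -> 'I_N.+1 * 'I_N.+1 * 'I_N.+1),
  (forall i, PW (a i)) -> PW (interp3 opsF a).
Proof.
move=> f a H; rewrite /PW /interp3 /opsF /=.
have le := @leq_ord N.
rewrite !inordK ?ltnS; try (apply: Fle; exact: le).
exact: Fpres (le _) (le _) (le _) (le _) (le _) (le _) (le _) (le _) (le _) (H i0) (H i1) (H i2).
Qed.

Definition BW := Bsub closedW.

Lemma BW_in : VW BW.
Proof. exact: Bsub_in. Qed.

Lemma ev3_BW (t : term sig3 'I_3) (x y z : BW) :
  let u := proj1_sig (ev3 t x y z) in
  [/\ u.1.1 = ev3 (A := AW) t (proj1_sig x).1.1 (proj1_sig y).1.1 (proj1_sig z).1.1,
      u.1.2 = ev3 (A := AW) t (proj1_sig x).1.2 (proj1_sig y).1.2 (proj1_sig z).1.2 &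
      u.2 = ev3 (A := AW) t (proj1_sig x).2 (proj1_sig y).2 (proj1_sig z).2].
Proof. by rewrite /= ev3_Bsub. Qed.

Lemma BW_Q3 (u : BW) : Q3 (proj1_sig u).1.1 (proj1_sig u).1.2 (proj1_sig u).2.
Proof. exact: (proj2_sig u). Qed.

End World.

Set Implicit Arguments. Unset Strict Implicit. Unset Printing Implicit Defensive.

Lemma part1 : forall n : nat, 2 <= n -> ~~ odd n ->
     exists (S : signature) (Sigma : equation S -> Prop),
       locally_finite (variety_of Sigma) /\
       n_distributive (variety_of Sigma) n /\
       ~ n_directed_distributive (variety_of Sigma) (n - 1).
Proof.
move=> n n2 en.
set N := n - 1.
have EN : n = N.+1 by rewrite /N; lia.
have oN : odd N by move: en; rewrite EN /= negbK.
have N1 : 1 <= N by lia.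
have Fle : forall h x y z, x <= N -> y <= N -> z <= N -> tt N h x y z <= N.
  by move=> h x y z hx _ hz; apply: tt_le.
exists sig3, (SigA (@opsF N (tt N))).
split; first exact: lf.
split.
  exists tm; split; first split.
  - apply: (W_proj1 Fle) => // x y z hx _ _; by rewrite /tt.
  - split.
      apply: (W_proj3 Fle) => // x y z _ _ hz; rewrite /tt; have -> : (n == 0) = false by lia.
      by have -> : (N < n) = true by lia.
    move=> h _; apply: (W_xyx Fle) => // x y _ _; exact: tt_xyx.
  - move=> h hn; case oh: (odd h) => /=.
      apply: (W_xzz Fle) => // x z hx hz; apply: tt_odd => //; lia.
    apply: (W_xxz Fle) => // x z hx hz; apply: tt_even => //; [by rewrite oh | lia].
move=> [t [[b1 [b2 b3]] Hd]].
have Fpres : forall h p1 p2 p3 q1 q2 q3 r1 r2 r3, p1 <= N -> p2 <= N -> p3 <= N ->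
  q1 <= N -> q2 <= N -> q3 <= N -> r1 <= N -> r2 <= N -> r3 <= N ->
  sigma p1 q1 r1 -> sigma p2 q2 r2 -> sigma p3 q3 r3 ->
  sigma (tt N h p1 p2 p3) (tt N h q1 q2 q3) (tt N h r1 r2 r3).
  by move=> h p1 p2 p3 q1 q2 q3 r1 r2 r3 ? ? ? ? ? ? ? ? ?; apply: tt_sigma.
pose B := BW Fle Fpres.
have VB : variety_of (SigA (@opsF N (tt N))) B by exact: BW_in.
have VA0 : variety_of (SigA (@opsF N (tt N))) (Afin (@opsF N (tt N))) by exact: Afin_in.
have x0P : sigma (@ord0 N) (@ord0 N) (@ord0 N) by [].
have y0P : sigma (@ord0 N) (@ord_max N) (@ord_max N) by rewrite /sigma /=; case: eqP => //; lia.
have z0P : sigma (@ord_max N) (@ord_max N) (@ord0 N) by rewrite /sigma /= leqnSn.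
pose x0 : B := exist _ (ord0, ord0, ord0) x0P.
pose y0 : B := exist _ (ord0, ord_max, ord_max) y0P.
pose z0 : B := exist _ (ord_max, ord_max, ord0) z0P.
pose AA := Afin (@opsF N (tt N)).
pose p h := nat_of_ord (ev3 (A := AA) (t h) ord0 ord0 ord_max).
pose q h := nat_of_ord (ev3 (A := AA) (t h) ord0 ord_max ord_max).
pose r h := nat_of_ord (ev3 (A := AA) (t h) ord0 ord_max ord0).
have Hsig : forall h, r h = 0 -> q h <= (p h).+1.
  move=> h; have [E1 E2 E3] := ev3_BW (t h) x0 y0 z0.
  have Q := BW_Q3 (ev3 (t h) x0 y0 z0).
  rewrite /= in E1 E2 E3; rewrite E1 E2 E3 /sigma in Q.
  by move=> /eqP R0; move: Q; rewrite /p /q; rewrite /r in R0; rewrite R0.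
have Hr : forall h, h <= n - 1 -> r h = 0.
  by move=> h hh; rewrite /r (b3 h hh _ VA0).
have Hp0 : p 0 = 0 by rewrite /p (b1 _ VA0).
have Hq0 : q 0 = 0 by rewrite /q (b1 _ VA0).
have Hpq : forall h, h < n - 1 -> p h.+1 = q h.
  by move=> h hh; rewrite /p /q (Hd h hh _ VA0).
have HpN : p (n - 1) = N by rewrite /p (b2 _ VA0).
have key : forall h, 1 <= h <= n - 1 -> p h <= h.-1.
  elim=> [//|h IH] hh.
  case: (posnP h) => [E|h0].
    by rewrite E Hpq ?Hq0 //; lia.
  rewrite Hpq; last by lia.
  have := Hsig h (Hr h ltac:(lia)); have := IH ltac:(lia); lia.
have := key (n - 1) ltac:(lia); rewrite HpN; lia.
Qed.

Set Implicit Arguments. Unset Strict Implicit. Unset Printing Implicit Defensive.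

Section Rho.
Variable n : nat.
Hypothesis n2 : 2 <= n.
Let N := n - 1.
Lemma EN : n = N.+1. Proof. rewrite /N; lia. Qed.
Lemma N1 : 1 <= N. Proof. rewrite /N; lia. Qed.
Lemma Fle : forall h x y z, x <= N -> y <= N -> z <= N -> dd N h x y z <= N.
Proof. by move=> *; apply: dd_le. Qed.
Lemma Fpres : forall h p1 p2 p3 q1 q2 q3 r1 r2 r3, p1 <= N -> p2 <= N -> p3 <= N ->
  q1 <= N -> q2 <= N -> q3 <= N -> r1 <= N -> r2 <= N -> r3 <= N ->
  rho p1 q1 r1 -> rho p2 q2 r2 -> rho p3 q3 r3 ->
  rho (dd N h p1 p2 p3) (dd N h q1 q2 q3) (dd N h r1 r2 r3).
Proof. by move=> h p1 p2 p3 q1 q2 q3 r1 r2 r3 ? ? ? ? ? ? ? ? ?; apply: dd_rho. Qed.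

Definition SigR := SigA (@opsF N (dd N)).
Definition VR := variety_of SigR.
Definition AR := Afin (@opsF N (dd N)).
Definition BR := BW Fle Fpres.

Lemma VR_A : VR AR. Proof. exact: Afin_in. Qed.
Lemma VR_B : VR BR. Proof. exact: BW_in. Qed.

Lemma lfR : locally_finite VR. Proof. exact: lf. Qed.

Lemma dirR : n_directed_distributive VR n.
Proof.
exists tm; split; first split.
- apply: (W_proj1 Fle) => // x y z hx _ _; by rewrite /dd.
- split.
    apply: (W_proj3 Fle) => // x y z _ _ hz; rewrite /dd EN.
    by rewrite /= ltnSn.
  move=> h _; apply: (W_xyx Fle) => // x y _ _; exact: dd_xyx.
- move=> h hn; apply: (W_dir Fle) => // x z hx hz; apply: dd_dir => //.
  rewrite /N; lia.
Qed.

Lemma x0P : rho (@ord0 N) (@ord0 N) (@ord0 N). Proof. by []. Qed.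
Lemma y0P : rho (@ord0 N) (@ord_max N) (@ord_max N).
Proof. rewrite /rho /=; have := N1; case: eqP => //; lia. Qed.
Lemma z0P : rho (@ord_max N) (@ord_max N) (@ord0 N).
Proof. by rewrite /rho /= leqnn leqnSn. Qed.
Definition x0 : BR := exist _ (ord0, ord0, ord0) x0P.
Definition y0 : BR := exist _ (ord0, ord_max, ord_max) y0P.
Definition z0 : BR := exist _ (ord_max, ord_max, ord0) z0P.

Section Terms.
Variable t : nat -> term sig3 'I_3.
Let p h := nat_of_ord (ev3 (A := AR) (t h) ord0 ord0 ord_max).
Let q h := nat_of_ord (ev3 (A := AR) (t h) ord0 ord_max ord_max).
Let r h := nat_of_ord (ev3 (A := AR) (t h) ord0 ord_max ord0).

Lemma Hrho h : p h <= q h /\ (r h = 0 -> q h <= (p h).+1).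
Proof.
have [E1 E2 E3] := ev3_BW (t h) x0 y0 z0.
have Q := BW_Q3 (ev3 (t h) x0 y0 z0).
rewrite /= in E1 E2 E3; rewrite E1 E2 E3 /rho in Q.
case/andP: Q => Q1 Q2; split => // R0.
by move: Q2; rewrite -/(r h) R0.
Qed.
End Terms.

Lemma not_alvin : ~ n_alvin VR (2 * n - 2).
Proof.
move=> [t [[b1 [b2 b3]] Ha]].
set k := 2 * n - 2.
pose p h := nat_of_ord (ev3 (A := AR) (t h) ord0 ord0 ord_max).
pose q h := nat_of_ord (ev3 (A := AR) (t h) ord0 ord_max ord_max).
have Hr : forall h, h <= k -> nat_of_ord (ev3 (A := AR) (t h) ord0 ord_max ord0) = 0.
  by move=> h hh; rewrite (b3 h hh _ VR_A).
have Hp0 : p 0 = 0 by rewrite /p (b1 _ VR_A).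
have Hq0 : q 0 = 0 by rewrite /q (b1 _ VR_A).
have HpN : p k = N by rewrite /p (b2 _ VR_A).
have Hodd : forall h, h < k -> odd h -> p h.+1 = p h.
  by move=> h hh oh; have := Ha h hh _ VR_A ord0 ord_max; rewrite oh /p => ->.
have Hev : forall h, h < k -> ~~ odd h -> q h.+1 = q h.
  by move=> h hh oh; have := Ha h hh _ VR_A ord0 ord_max; rewrite (negbTE oh) /q => ->.
have key : forall h, h <= k -> 2 * q h <= h.
  elim=> [_|h IH hh]; first by rewrite Hq0.
  have IH' := IH ltac:(lia).
  case: (boolP (odd h)) => oh.
    have [j Ej] := @oddE h oh.
    have [A1 A2] := @Hrho t h. have [B1 B2] := @Hrho t h.+1.
    have B2' := B2 (Hr h.+1 hh).
    rewrite -/(p h) -/(q h) in A1 A2; rewrite -/(p h.+1) -/(q h.+1) in B1 B2'.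
    rewrite (Hodd h hh oh) in B2'; lia.
  have [j Ej] := @evenE h oh.
  rewrite Hev //; lia.
have k1 : k.-1 < k by rewrite /k; lia.
have K1 : 2 * q k.-1 <= k.-1 := key k.-1 ltac:(lia).
have [A1 _] := @Hrho t k.-1.
rewrite -/(p k.-1) -/(q k.-1) in A1.
have Ek : k = k.-1.+1 by rewrite /k; lia.
have ok : odd k.-1.
  have -> : k.-1 = (2 * (n - 2)).+1 by rewrite /k; lia.
  by rewrite /= oddM andFb.
have E : p k = p k.-1 by rewrite {1}Ek; apply: Hodd.
have Ek' : k = 2 * n - 2 by [].
have EN' : N = n - 1 by [].
lia.
Qed.

Lemma not_jonsson : ~ n_distributive VR (2 * n - 3).
Proof.
move=> [t [[b1 [b2 b3]] Hj]].
set k := 2 * n - 3.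
pose p h := nat_of_ord (ev3 (A := AR) (t h) ord0 ord0 ord_max).
pose q h := nat_of_ord (ev3 (A := AR) (t h) ord0 ord_max ord_max).
have Hr : forall h, h <= k -> nat_of_ord (ev3 (A := AR) (t h) ord0 ord_max ord0) = 0.
  by move=> h hh; rewrite (b3 h hh _ VR_A).
have Hp0 : p 0 = 0 by rewrite /p (b1 _ VR_A).
have HpN : p k = N by rewrite /p (b2 _ VR_A).
have Hev : forall h, h < k -> ~~ odd h -> p h.+1 = p h.
  by move=> h hh oh; have := Hj h hh _ VR_A ord0 ord_max; rewrite oh /p => ->.
have Hodd : forall h, h < k -> odd h -> q h.+1 = q h.
  by move=> h hh oh; have := Hj h hh _ VR_A ord0 ord_max; rewrite oh /q => ->.
have key : forall h, h <= k -> 2 * p h <= h.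
  elim=> [_|h IH hh]; first by rewrite Hp0.
  have IH' := IH ltac:(lia).
  case: (boolP (odd h)) => oh.
    have [j Ej] := @oddE h oh.
    have [A1 A2] := @Hrho t h. have [B1 B2] := @Hrho t h.+1.
    have A2' := A2 (Hr h ltac:(lia)).
    rewrite -/(p h) -/(q h) in A1 A2'; rewrite -/(p h.+1) -/(q h.+1) in B1 B2.
    rewrite (Hodd h hh oh) in B1; lia.
  have [j Ej] := @evenE h oh.
  rewrite Hev //; lia.
have := key k (leqnn k).
have Ek' : k = 2 * n - 3 by [].
have EN' : N = n - 1 by [].
lia.
Qed.

Definition alR (u w : BR) := (proj1_sig u).2 = (proj1_sig w).2.
Definition beR (u w : BR) := (proj1_sig u).1.1 = (proj1_sig w).1.1.
Definition gaR (u w : BR) := (proj1_sig u).1.2 = (proj1_sig w).1.2.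

Lemma cong_pr (pr : 'I_N.+1 * 'I_N.+1 * 'I_N.+1 -> 'I_N.+1)
  (Hpr : forall f (a : 'I_(arity f) -> 'I_N.+1 * 'I_N.+1 * 'I_N.+1),
     pr (interp3 (@opsF N (dd N)) a) = @opsF N (dd N) f (fun i => pr (a i))) :
  is_congruence (fun u w : BR => pr (proj1_sig u) = pr (proj1_sig w)).
Proof.
split; first by [].
split; first by move=> x y ->.
split; first by move=> x y z -> ->.
move=> f u w H /=; rewrite !Hpr; congr (opsF _ _).
by apply: functional_extensionality => i; apply: H.
Qed.

Lemma cong_al : is_congruence alR.
Proof. by apply: (cong_pr (pr := fun u => u.2)). Qed.
Lemma cong_be : is_congruence beR.
Proof. by apply: (cong_pr (pr := fun u => u.1.1)). Qed.
Lemma cong_ga : is_congruence gaR.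
Proof. by apply: (cong_pr (pr := fun u => u.1.2)). Qed.

Lemma inv_chain : forall j w, relpow j.+1 (relint alR (relcomp gaR beR)) x0 w ->
  [/\ nat_of_ord (proj1_sig w).2 = 0, nat_of_ord (proj1_sig w).1.1 <= j &
      nat_of_ord (proj1_sig w).1.2 <= j.+1].
Proof.
have Hw : forall w : BR, nat_of_ord (proj1_sig w).1.1 <= (proj1_sig w).1.2 /\
   (nat_of_ord (proj1_sig w).2 = 0 -> nat_of_ord (proj1_sig w).1.2 <= (nat_of_ord (proj1_sig w).1.1).+1).
  move=> w; have := BW_Q3 w; rewrite /rho => /andP[A B]; split => // E.
  by move: B; rewrite E.
elim=> [|j IH] w /=.
  move=> [A [m [G B]]].
  have [Hm1 _] := Hw m; have [_ Hw2] := Hw w.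
  move: A G B; rewrite /alR /gaR /beR /= => A G B.
  have A' : nat_of_ord (proj1_sig w).2 = 0 by rewrite -A.
  split => //.
    by rewrite -B; move: Hm1; rewrite -G.
  have := Hw2 A'; rewrite -B; move: Hm1; rewrite -G /=; lia.
move=> [u [Hu [A [m [G B]]]]].
have [U1 U2 U3] := IH u Hu.
have [Hm1 _] := Hw m; have [_ Hw2] := Hw w.
move: A G B; rewrite /alR /gaR /beR => A G B.
have A' : nat_of_ord (proj1_sig w).2 = 0 by rewrite -A.
have W1 : nat_of_ord (proj1_sig w).1.1 <= j.+1.
  rewrite -B; move: Hm1; rewrite -G => Hm1; exact: leq_trans Hm1 U3.
split => //.
apply: leq_trans (Hw2 A') _; by rewrite ltnS.
Qed.

Lemma not_cong : ~ cong_id_holds VR (n - 1).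
Proof.
move=> H.
have := H BR VR_B alR beR gaR cong_al cong_be cong_ga x0 z0.
have Hx : relint alR (relcomp beR gaR) x0 z0.
  by split; [|exists y0].
move=> /(_ Hx).
have -> : n - 1 = (n - 2).+1 by lia.
move=> /inv_chain [_ HH _]; move: HH => /=.
have EN' : N = n - 1 by [].
lia.
Qed.
End Rho.


Theorem theorem5p2 :
  (forall n : nat, 2 <= n -> ~~ odd n ->
     exists (S : signature) (Sigma : equation S -> Prop),
       locally_finite (variety_of Sigma) /\
       n_distributive (variety_of Sigma) n /\
       ~ n_directed_distributive (variety_of Sigma) (n - 1)) /\
  (forall n : nat, 2 <= n ->
     exists (S : signature) (Sigma : equation S -> Prop),
       locally_finite (variety_of Sigma) /\
       n_directed_distributive (variety_of Sigma) n /\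
       ~ n_alvin (variety_of Sigma) (2 * n - 2) /\
       ~ n_distributive (variety_of Sigma) (2 * n - 3)) /\
  (forall n : nat, 2 <= n ->
     exists (S : signature) (Sigma : equation S -> Prop),
       locally_finite (variety_of Sigma) /\
       n_directed_distributive (variety_of Sigma) n /\
       ~ cong_id_holds (variety_of Sigma) (n - 1)).
Proof.
split; first exact: part1.
split.
- move=> n n2; exists sig3, (SigR n).
  split; first exact: lfR.
  split; first exact: dirR.
  split; [exact: not_alvin | exact: not_jonsson].
- move=> n n2; exists sig3, (SigR n).
  split; first exact: lfR.
  split; first exact: dirR.
  exact: not_cong.
Qed.
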